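(* Let $A$ be an $m\times n$ matrix with nonnegative entries in $[0,1]$ and no zero column, and let $H$ be the smallest nonzero entry of $A$. Then, for DIMSUM with parameter $\gamma$, the expected number of values emitted to any single key $(i,j)$ is at most $\gamma/H^2$ (independent of $m$).
   Context: Let $A=(a_{ki})$ be an $m\times n$ real matrix with rows $r_1,\dots,r_m$ and columns $c_1,\dots,c_n$; $\|c_i\|$ is the Euclidean norm of column $i$ (assumed nonzero). DIMSUM with parameter $\gamma>0$ is the following randomized procedure. For each pair of distinct column indices $(i,j)$ set $p_{ij}=\min\!\left(1,\frac{\gamma}{\|c_i\|\|c_j\|}\right)$. For each row $k$ and each pair $(i,j)$ with $a_{ki}a_{kj}\neq 0$, independently (over all $k$ and all pairs) with probability $p_{ij}$ the value $a_{ki}a_{kj}$ is emitted to key $(i,j)$ (one ''emission''). *)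

(* Defs.v *)
From HB Require Import structures.
From mathcomp Require Import all_boot all_order all_algebra.
Set Implicit Arguments. Unset Strict Implicit. Unset Printing Implicit Defensive.
Import Order.TTheory GRing.Theory Num.Theory.
Local Open Scope ring_scope.

Definition col_norm (R : rcfType) (m n : nat) (A : 'M[R]_(m, n)) (i : 'I_n) : R :=
  Num.sqrt (\sum_(k < m) A k i ^+ 2).

Definition dimsum_p (R : rcfType) (m n : nat) (A : 'M[R]_(m, n)) (gamma : R)
    (i j : 'I_n) : R :=
  Num.min 1 (gamma / (col_norm A i * col_norm A j)).

(* Expected number of emissions to key (i,j): the number of emissions is a sum,
   over rows k with a_ki a_kj <> 0, of independent Bernoulli(p_ij) indicators;
   by linearity its expectation is the sum of the success probabilities. *)
Definition dimsum_expected_emissions (R : rcfType) (m n : nat) (A : 'M[R]_(m, n))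
    (gamma : R) (i j : 'I_n) : R :=
  \sum_(k < m | A k i * A k j != 0) dimsum_p A gamma i j.

(* Main.v *)
Require Import Defs.
From HB Require Import structures.
From mathcomp Require Import all_boot all_order all_algebra.
From mathcomp Require Import ring.
Import Order.TTheory GRing.Theory Num.Theory.
Local Open Scope ring_scope.

Theorem theorem6 (R : rcfType) (m n : nat) (A : 'M[R]_(m, n)) (gamma H : R) :
  0 < gamma ->
  (forall k i, 0 <= A k i <= 1) ->
  (forall i : 'I_n, exists k : 'I_m, A k i != 0) ->
  (* H is the smallest nonzero entry of A *)
  (exists k i, A k i != 0 /\ A k i = H) ->
  (forall k i, A k i != 0 -> H <= A k i) ->
  forall i j : 'I_n, i != j ->
    dimsum_expected_emissions A gamma i j <= gamma / H ^+ 2.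
Proof.
move=> gp A01 _ [k0 [i0 [nz0 eH]]] Hmin i j _.
have A0 k l : 0 <= A k l by case/andP: (A01 k l).
have hH : 0 < H by rewrite -eH lt0r nz0 A0.
rewrite /dimsum_expected_emissions.
set P := (fun k : 'I_m => A k i * A k j != 0).
set p := dimsum_p A gamma i j.
rewrite sumr_const.
set s := #|_|.
have bnd : forall l, l = i \/ l = j ->
    s%:R * H ^+ 2 <= \sum_(k < m) A k l ^+ 2.
  move=> l hl.
  rewrite (bigID P) /= -[X in X <= _]addr0 lerD //; last by apply: sumr_ge0 => *; rewrite sqr_ge0.
  rewrite mulrC mulr_natr -sumr_const.
  apply: ler_sum => k Pk.
  have : A k i != 0 /\ A k j != 0.
    by move: Pk; rewrite unfold_in /= mulf_eq0 negb_or => /andP.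
  move=> [ni nj].
  have nl : A k l != 0 by case: hl => ->.
  rewrite ler_pXn2r // ?nnegrE ?(ltW hH) ?A0 //.
  exact: Hmin.
have [s0|spos] := posnP s.
  by rewrite s0 mulr0n divr_ge0 // ?ltW // exprn_gt0.
have Hpos2 : 0 < H ^+ 2 by rewrite exprn_gt0.
have cpos : 0 < s%:R * H ^+ 2 by rewrite mulr_gt0 // ltr0n.
have sq0 l : 0 <= \sum_(k < m) A k l ^+ 2 by apply: sumr_ge0 => *; rewrite sqr_ge0.
have hc : s%:R * H ^+ 2 <= col_norm A i * col_norm A j.
  rewrite /col_norm -sqrtrM // -(ger0_norm (ltW cpos)) -sqrtr_sqr ler_sqrt;
    last by rewrite mulr_ge0.
  rewrite expr2; apply: le_trans (ler_wpM2r (ltW cpos) (bnd i (or_introl erefl))) (ler_wpM2l (sq0 i) (bnd j (or_intror erefl))).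
have hp : p <= gamma / (s%:R * H ^+ 2).
  rewrite /p /dimsum_p ge_min; apply/orP; right.
  rewrite ler_pM2l // lef_pV2 // posrE //.
  exact: lt_le_trans hc.
rewrite -mulr_natl; apply: le_trans (ler_wpM2l _ hp) _; first by rewrite ler0n.
rewrite le_eqVlt; apply/orP; left; apply/eqP.
field; by rewrite gt_eqF // pnatr_eq0 -lt0n spos.
Qed.
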